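(* Let $A\| B$ be a Frobenius extension such that $A_B$ is a generator, and let $E=\mathrm{End}(A_B)$ with $\lambda:A\to E$, $\lambda(a)(x)=ax$. If the extension $E\| A$ (via $\lambda$) is D2, then $A\| B$ is D2.
   Context: Algebras over a commutative ring $K$; an algebra extension $A\| B$ is a unit-preserving homomorphism $B\to A$. $A\| B$ is a Frobenius extension if $A_B$ is finitely generated projective and $A\cong\mathrm{Hom}(A_B,B_B)$ as $B$-$A$-bimodules. An extension $C\| D$ is right D2 if $C\otimes_DC$ is isomorphic as a $C$-$D$-bimodule to a direct summand of a finite direct sum $C^n$ of the natural bimodule, left D2 if the same holds as $D$-$C$-bimodules, and D2 if it is both left and right D2. *)

(* Defs.v *)
From HB Require Import structures.
From mathcomp Require Import all_boot all_order all_algebra.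
Set Implicit Arguments. Unset Strict Implicit. Unset Printing Implicit Defensive.
Import GRing.Theory.
Local Open Scope ring_scope.

Section Extension.
Variables (C D : pzRingType) (i : {rmorphism D -> C}).

Definition additive_fun (U V : zmodType) (h : U -> V) :=
  forall x y, h (x + y) = h x + h y.

Definition balanced (W : zmodType) (b : C -> C -> W) :=
  [/\ forall x x' y, b (x + x') y = b x y + b x' y,
      forall x y y', b x (y + y') = b x y + b x y' &
      forall x d y, b (x * i d) y = b x (i d * y)].

Definition is_tensor (T : zmodType) (t : C -> C -> T) :=
  balanced t /\
  forall (W : zmodType) (b : C -> C -> W), balanced b ->
    (exists h : T -> W, additive_fun h /\ forall x y, h (t x y) = b x y) /\
    (forall h h' : T -> W, additive_fun h -> additive_fun h' ->
       (forall x y, h (t x y) = h' (t x y)) -> forall s, h s = h' s).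

(* L : T -> T is the action  s |-> a . s . b  on the tensor product, i.e.
   the additive map with  x (x) y |-> a x (x) y b  (unique by universality) *)
Definition tensor_act (T : zmodType) (t : C -> C -> T) (a b : C) (L : T -> T) :=
  additive_fun L /\ forall x y, L (t x y) = t (a * x) (y * b).

(* C (x)_D C is isomorphic, as a bimodule whose left scalars act through
   [lft] and right scalars through [rgt], to a direct summand of C^n with its
   natural bimodule structure: there are bimodule maps
   u : C (x)_D C -> C^n,  v : C^n -> C (x)_D C  with  v o u = id. *)
Definition summand_of_power (T : zmodType) (t : C -> C -> T)
    (S1 S2 : pzRingType) (lft : S1 -> C) (rgt : S2 -> C) :=
  exists n : nat, exists (u : T -> {ffun 'I_n -> C}) (v : {ffun 'I_n -> C} -> T),
    [/\ additive_fun u, additive_fun v, (forall s, v (u s) = s) &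
        forall (a : S1) (b : S2) (L : T -> T), tensor_act t (lft a) (rgt b) L ->
          (forall s, u (L s) = [ffun j => lft a * u s j * rgt b]) /\
          (forall w : {ffun 'I_n -> C}, v [ffun j => lft a * w j * rgt b] = L (v w))].

Definition right_D2 :=
  forall (T : zmodType) (t : C -> C -> T), is_tensor t ->
    summand_of_power t (@id C) i.

Definition left_D2 :=
  forall (T : zmodType) (t : C -> C -> T), is_tensor t ->
    summand_of_power t i (@id C).

Definition D2 := left_D2 /\ right_D2.

End Extension.

Section RightModules.
Variables (A B : pzRingType) (f : {rmorphism B -> A}).

Definition rlin_to_B (phi : A -> B) :=
  additive_fun phi /\ forall x b, phi (x * f b) = phi x * b.

Definition rlin_endo (g : A -> A) :=
  additive_fun g /\ forall x b, g (x * f b) = g x * f b.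

Definition fg_projective :=
  exists n : nat, exists (p : A -> {ffun 'I_n -> B}) (q : {ffun 'I_n -> B} -> A),
    [/\ additive_fun p, additive_fun q,
        forall a b, p (a * f b) = [ffun j => p a j * b],
        forall (w : {ffun 'I_n -> B}) b, q [ffun j => w j * b] = q w * f b &
        forall a, q (p a) = a].

Definition generator :=
  exists n : nat, exists (p : B -> {ffun 'I_n -> A}) (q : {ffun 'I_n -> A} -> B),
    [/\ additive_fun p, additive_fun q,
        forall c b, p (c * b) = [ffun j => p c j * f b],
        forall (w : {ffun 'I_n -> A}) b, q [ffun j => w j * f b] = q w * b &
        forall c, q (p c) = c].

(* A is isomorphic to Hom(A_B, B_B) as B-A-bimodules, where
   (b . phi . a)(x) = b * phi (a * x). *)
Definition frob_iso :=
  exists Phi : A -> A -> B,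
    [/\ forall a, rlin_to_B (Phi a),
        forall a a' x, Phi (a + a') x = Phi a x + Phi a' x,
        forall b a a' x, Phi (f b * a * a') x = b * Phi a (a' * x),
        forall a a', (forall x, Phi a x = Phi a' x) -> a = a' &
        forall phi, rlin_to_B phi -> exists a, forall x, Phi a x = phi x].

Definition Frobenius := fg_projective /\ frob_iso.

(* (E, theta) is (a ring isomorphic to) End(A_B): theta is a ring
   isomorphism from E onto the ring of right B-linear endomorphisms of A
   (multiplication = composition). *)
Definition is_End (E : pzRingType) (theta : E -> A -> A) :=
  [/\ forall e, rlin_endo (theta e),
      (forall e e' x, theta (e + e') x = theta e x + theta e' x),
      (forall e e' x, theta (e * e') x = theta e (theta e' x)) /\
      (forall x, theta 1 x = x),
      forall e e', (forall x, theta e x = theta e' x) -> e = e' &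
      forall g, rlin_endo g -> exists e, forall x, theta e x = g x].

End RightModules.

(* Main.v *)
Require Import Defs.
From HB Require Import structures.
From mathcomp Require Import all_boot all_order all_algebra.
Set Implicit Arguments. Unset Strict Implicit. Unset Printing Implicit Defensive.
From Stdlib Require Import ClassicalEpsilon.
Set Warnings "-redundant-canonical-projection -projection-no-head-constant".
Import GRing.Theory.
Local Open Scope ring_scope.

Lemma addf0 (U V : zmodType) (h : U -> V) : additive_fun h -> h 0 = 0.
Proof. move=> hA; have e := hA 0 0; rewrite addr0 in e.
by apply: (addrI (h 0)); rewrite addr0 -e. Qed.
Lemma addfN (U V : zmodType) (h : U -> V) : additive_fun h -> forall x, h (- x) = - h x.
Proof. move=> hA x; apply: (addrI (h x)); by rewrite -hA !subrr addf0. Qed.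
Lemma addfB (U V : zmodType) (h : U -> V) : additive_fun h -> forall x y, h (x - y) = h x - h y.
Proof. by move=> hA x y; rewrite hA addfN. Qed.
Lemma addf_sum (U V : zmodType) (h : U -> V) : additive_fun h ->
  forall (I : Type) (r : seq I) (Pr : pred I) (F : I -> U),
  h (\sum_(i <- r | Pr i) F i) = \sum_(i <- r | Pr i) h (F i).
Proof. move=> hA I r Pr F; apply: (big_morph h hA (addf0 hA)). Qed.

Record addfun (V : zmodType) := AddFun { af :> V -> V; afP : additive_fun af }.
Section Fix.
Variables (V : zmodType) (PP : addfun V).
Let P : V -> V := PP.
Let Padd : additive_fun P := afP PP.
Definition fixpred : {pred V} := fun w => P w == w.
Lemma fix_closed : zmod_closed fixpred.
Proof.
split; first by rewrite /in_mem /= /fixpred (addf0 Padd).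
move=> x y; rewrite /in_mem /= /fixpred => /eqP Hx /eqP Hy.
by rewrite (addfB Padd) Hx Hy.
Qed.
HB.instance Definition _ := GRing.isZmodClosed.Build V fixpred fix_closed.
Record fixT : predArgType := FixT { fixval : V; fixvalP : fixval \in fixpred }.
HB.instance Definition _ := [isSub for fixval].
HB.instance Definition _ := [Choice of fixT by <:].
HB.instance Definition _ := [SubChoice_isSubZmodule of fixT by <:].
Lemma fixvalD : additive_fun fixval.
Proof. by []. Qed.
Lemma fixval_inj : injective fixval. Proof. exact: val_inj. Qed.
Lemma fixval_fix (s : fixT) : PP (fixval s) = fixval s.
Proof. by apply/eqP; have := fixvalP s. Qed.
End Fix.

Section Main.
Variables (A B E : pzRingType) (f : {rmorphism B -> A}) (theta : E -> A -> A)
  (lambda : {rmorphism A -> E}).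
Hypothesis th_add1 : forall e x y, theta e (x + y) = theta e x + theta e y.
Hypothesis th_rlin : forall e x b, theta e (x * f b) = theta e x * f b.
Hypothesis th_add : forall e e' x, theta (e + e') x = theta e x + theta e' x.
Hypothesis th_mul : forall e e' x, theta (e * e') x = theta e (theta e' x).
Hypothesis th_inj : forall e e', (forall x, theta e x = theta e' x) -> e = e'.
Hypothesis th_lam : forall a x, theta (lambda a) x = a * x.
Variable Ef : A -> B.
Hypothesis Ef_add : additive_fun Ef.
Hypothesis Ef_r : forall x b, Ef (x * f b) = Ef x * b.
Hypothesis Ef_l : forall x b, Ef (f b * x) = b * Ef x.
Hypothesis Ef_nd : forall a a', (forall z, Ef (a * z) = Ef (a' * z)) -> a = a'.
Variables (n : nat) (xs ys : 'I_n -> A).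
Hypothesis dual1 : forall z, \sum_i xs i * f (Ef (ys i * z)) = z.
Variable tau : A -> E.
Hypothesis tau_spec : forall y z, theta (tau y) z = f (Ef (y * z)).
Variables (k : nat) (as_ rs : 'I_k -> A).
Hypothesis gen : \sum_c Ef (rs c * as_ c) = 1.

Lemma th_addE e : additive_fun (theta e). Proof. exact: th_add1. Qed.
Lemma th_addF x : additive_fun (fun e => theta e x). Proof. by move=> ??; apply: th_add. Qed.
Lemma th0 x : theta 0 x = 0. Proof. exact: (addf0 (th_addF x)). Qed.
Lemma th_sum x I (r : seq I) (Pr : pred I) F :
  theta (\sum_(i <- r | Pr i) F i) x = \sum_(i <- r | Pr i) theta (F i) x.
Proof. exact: (addf_sum (th_addF x)). Qed.
Lemma th_xsum e I (r : seq I) (Pr : pred I) F :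
  theta e (\sum_(i <- r | Pr i) F i) = \sum_(i <- r | Pr i) theta e (F i).
Proof. exact: (addf_sum (th_addE e)). Qed.
Lemma th1 x : theta 1 x = x. Proof. by rewrite -(rmorph1 lambda) th_lam mul1r. Qed.
Lemma Ef_sum I (r : seq I) (Pr : pred I) F :
  Ef (\sum_(i <- r | Pr i) F i) = \sum_(i <- r | Pr i) Ef (F i).
Proof. exact: (addf_sum Ef_add). Qed.
Lemma Ef0 : Ef 0 = 0. Proof. exact: addf0. Qed.

Lemma dual2 y : \sum_i f (Ef (y * xs i)) * ys i = y.
Proof.
apply: Ef_nd => z; rewrite mulr_suml Ef_sum.
rewrite -{2}(dual1 z) mulr_sumr Ef_sum; apply: eq_bigr => i _.
by rewrite -mulrA Ef_l mulrA Ef_r.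
Qed.

Definition T0 x y := lambda x * tau y.
Lemma thT0 x y z : theta (T0 x y) z = x * f (Ef (y * z)).
Proof. by rewrite th_mul th_lam tau_spec. Qed.

Lemma T0_exp e : e = \sum_i T0 (theta e (xs i)) (ys i).
Proof.
apply: th_inj => z; rewrite th_sum.
under eq_bigr do rewrite thT0 -th_rlin.
by rewrite -th_xsum dual1.
Qed.

Lemma T0_bal x y b : T0 (x * f b) y = T0 x (f b * y).
Proof. by apply: th_inj => z; rewrite !thT0 -mulrA -mulrA Ef_l rmorphM. Qed.
Lemma T0_addl x x' y : T0 (x + x') y = T0 x y + T0 x' y.
Proof. by rewrite /T0 rmorphD mulrDl. Qed.
Lemma T0_addr x y y' : T0 x (y + y') = T0 x y + T0 x y'.
Proof. by apply: th_inj => z; rewrite th_add !thT0 mulrDl Ef_add rmorphD mulrDr. Qed.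
Lemma T0_lam x y a : T0 x y * lambda a = T0 x (y * a).
Proof. by apply: th_inj => z; rewrite th_mul !thT0 th_lam mulrA. Qed.
Lemma T0_mul x y x' y' : T0 x y * T0 x' y' = T0 (x * f (Ef (y * x'))) y'.
Proof.
by apply: th_inj => z; rewrite th_mul !thT0 [y * _]mulrA Ef_r rmorphM mulrA.
Qed.
Lemma T0_thl e x y : e * T0 x y = T0 (theta e x) y.
Proof. by apply: th_inj => z; rewrite th_mul !thT0 th_rlin. Qed.
Lemma T0_laml a x y : lambda a * T0 x y = T0 (a * x) y.
Proof. by rewrite /T0 mulrA rmorphM. Qed.
Lemma tauT0 y : tau y = T0 1 y.
Proof. by rewrite /T0 rmorph1 mul1r. Qed.

Definition rho r e := \sum_i f (Ef (r * theta e (xs i))) * ys i.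
Lemma rhoE r e z : Ef (rho r e * z) = Ef (r * theta e z).
Proof.
rewrite mulr_suml Ef_sum -{2}(dual1 z) th_xsum mulr_sumr Ef_sum.
apply: eq_bigr => i _; by rewrite -mulrA Ef_l th_rlin mulrA Ef_r.
Qed.
Lemma rho_add r : additive_fun (rho r).
Proof. by move=> e e'; apply: Ef_nd => z; rewrite mulrDl Ef_add !rhoE th_add mulrDr Ef_add. Qed.
Lemma rho_T0 r x y e : rho r (T0 x y * e) = f (Ef (r * x)) * rho y e.
Proof.
by apply: Ef_nd => z; rewrite rhoE th_mul thT0 mulrA Ef_r -mulrA Ef_l rhoE.
Qed.
Lemma rho_lam r e a : rho r (e * lambda a) = rho r e * a.
Proof. by apply: Ef_nd => z; rewrite rhoE th_mul th_lam -mulrA rhoE. Qed.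
Lemma rho11 : rho 1 1 = 1.
Proof. by apply: Ef_nd => z; rewrite rhoE th1. Qed.
Lemma rho_T01 r a : rho r (T0 a 1) = f (Ef (r * a)).
Proof. by rewrite -[T0 a 1]mulr1 rho_T0 rho11 mulr1. Qed.
Lemma T0_rho a r e : T0 a (rho r e) = T0 a r * e.
Proof.
apply: th_inj => z; rewrite th_mul !thT0.
have -> : Ef (rho r e * z) = Ef (r * theta e z) by apply: rhoE.
by [].
Qed.
Lemma T0_th x e y : T0 (theta e x) y = e * T0 x y.
Proof. by rewrite T0_thl. Qed.


(* ---- the tensor product E (x)_A E as a summand of E^n ---- *)
Local Notation V := {ffun 'I_n -> E}.
Definition coef (e2 : E) (i j : 'I_n) : E := lambda (f (Ef (ys i * theta e2 (xs j)))).
Definition Act (e1 e2 : E) (w : V) : V := [ffun j => \sum_i e1 * w i * coef e2 i j].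
Lemma Act_add e1 e2 : additive_fun (Act e1 e2).
Proof.
move=> w w'; apply/ffunP => j; rewrite !ffunE -big_split /=.
by apply: eq_bigr => i _; rewrite ffunE mulrDr mulrDl.
Qed.
Definition Pm : addfun V := AddFun (Act_add 1 1).
Definition raw x y : V := [ffun j => x * lambda (theta y (xs j))].
Lemma Act_raw e1 e2 x y : Act e1 e2 (raw x y) = raw (e1 * x) (y * e2).
Proof.
apply/ffunP => j; rewrite !ffunE.
under eq_bigr do rewrite ffunE /coef -!mulrA -rmorphM mulrA.
rewrite -mulr_sumr -rmorph_sum.
under eq_bigr do rewrite -th_rlin.
by rewrite -th_xsum dual1 th_mul.
Qed.
Lemma Act_fix e1 e2 w : Pm (Act e1 e2 w) = Act e1 e2 w.
Proof.
apply/ffunP => j; rewrite /= !ffunE.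
under eq_bigr do rewrite /Act ffunE mul1r mulr_suml.
rewrite exchange_big /=; apply: eq_bigr => i _.
under eq_bigr do rewrite /coef th1 -mulrA -!rmorphM.
rewrite -mulr_sumr -!rmorph_sum; congr (_ * lambda _).
under eq_bigr do rewrite -Ef_r -mulrA -th_rlin.
by rewrite -Ef_sum -mulr_sumr -th_xsum dual1.
Qed.
Lemma ActP e1 e2 w : Act e1 e2 w \in fixpred Pm.
Proof. by rewrite /in_mem /= /fixpred Act_fix. Qed.
Lemma raw_Act x y : raw x y = Act 1 1 (raw x y).
Proof. by rewrite Act_raw mul1r mulr1. Qed.
Lemma rawP x y : raw x y \in fixpred Pm.
Proof. rewrite raw_Act; exact: ActP. Qed.
Definition Tp := fixT Pm.
Definition tp x y : Tp := FixT (rawP x y).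
Definition Lsub e1 e2 (s : Tp) : Tp := FixT (ActP e1 e2 (fixval s)).

Lemma fixval_sum I (r : seq I) (Pr : pred I) (F : I -> Tp) :
  fixval (\sum_(i <- r | Pr i) F i) = \sum_(i <- r | Pr i) fixval (F i).
Proof. exact: (addf_sum (@fixvalD _ Pm)). Qed.

Lemma Tp_exp (s : Tp) : s = \sum_i tp (fixval s i) (tau (ys i)).
Proof.
apply: fixval_inj; rewrite fixval_sum -{1}(fixval_fix s) /=.
apply/ffunP => j; rewrite !ffunE sum_ffunE; apply: eq_bigr => i _.
by rewrite !ffunE tau_spec mul1r /coef th1.
Qed.

Lemma Lsub_act e1 e2 : tensor_act tp e1 e2 (Lsub e1 e2).
Proof.
split; first by move=> s s'; apply: fixval_inj; rewrite /= Act_add.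
by move=> x y; apply: fixval_inj; rewrite /= Act_raw.
Qed.

Lemma tp_tensor : is_tensor lambda tp.
Proof.
have bal : balanced lambda tp.
  split.
  - by move=> x x' y; apply: fixval_inj; apply/ffunP => j; rewrite /= !ffunE mulrDl.
  - by move=> x y y'; apply: fixval_inj; apply/ffunP => j;
      rewrite /= !ffunE th_add rmorphD mulrDr.
  - by move=> x d y; apply: fixval_inj; apply/ffunP => j;
      rewrite /= !ffunE th_mul th_lam rmorphM mulrA.
split=> // W b [b1 b2 b3]; split.
  exists (fun s : Tp => \sum_i b (fixval s i) (tau (ys i))); split.
    move=> s s'; rewrite -big_split /=; apply: eq_bigr => i _.
    by rewrite /= ffunE b1.
  move=> x y /=.
  under eq_bigr do rewrite ffunE b3.
  have b2A : additive_fun (b x) by move=> ??; apply: b2.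
  rewrite -(addf_sum b2A); congr (b x _).
  rewrite {2}(T0_exp y); apply: eq_bigr => i _; by rewrite /T0.
move=> h h' hA h'A eqh s; rewrite (Tp_exp s) (addf_sum hA) (addf_sum h'A).
by apply: eq_bigr => i _; apply: eqh.
Qed.

Lemma tp_addl x x' y : tp (x + x') y = tp x y + tp x' y.
Proof. by case: tp_tensor => [[? ? ?] _]. Qed.
Lemma tp_addr x y y' : tp x (y + y') = tp x y + tp x y'.
Proof. by case: tp_tensor => [[? ? ?] _]. Qed.
Lemma tp_bal x a y : tp (x * lambda a) y = tp x (lambda a * y).
Proof. by case: tp_tensor => [[? ? ?] _]. Qed.
Lemma tp_sumr x I (r : seq I) (Pr : pred I) F :
  tp x (\sum_(i <- r | Pr i) F i) = \sum_(i <- r | Pr i) tp x (F i).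
Proof. by apply: (addf_sum (h := tp x)) => ??; apply: tp_addr. Qed.
Lemma tp_suml y I (r : seq I) (Pr : pred I) F :
  tp (\sum_(i <- r | Pr i) F i) y = \sum_(i <- r | Pr i) tp (F i) y.
Proof. by apply: (addf_sum (h := tp^~ y)) => ??; apply: tp_addl. Qed.
Lemma T0_suml y I (r : seq I) (Pr : pred I) F :
  T0 (\sum_(i <- r | Pr i) F i) y = \sum_(i <- r | Pr i) T0 (F i) y.
Proof. by apply: (addf_sum (h := T0^~ y)) => ??; apply: T0_addl. Qed.
Lemma T0_sumr x I (r : seq I) (Pr : pred I) F :
  T0 x (\sum_(i <- r | Pr i) F i) = \sum_(i <- r | Pr i) T0 x (F i).
Proof. by apply: (addf_sum (h := T0 x)) => ??; apply: T0_addr. Qed.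
Lemma Lsub_add e1 e2 : additive_fun (Lsub e1 e2).
Proof. by case: (Lsub_act e1 e2). Qed.
Lemma Lsub_tp e1 e2 x y : Lsub e1 e2 (tp x y) = tp (e1 * x) (y * e2).
Proof. by case: (Lsub_act e1 e2). Qed.
Lemma gen_f : \sum_c f (Ef (rs c * as_ c)) = 1.
Proof. by rewrite -rmorph_sum gen rmorph1. Qed.
Lemma gen_fb x b : \sum_c f (Ef (rs c * (as_ c * f b))) * x = f b * x.
Proof.
under eq_bigr do rewrite mulrA Ef_r.
by rewrite -mulr_suml -rmorph_sum -mulr_suml gen mul1r.
Qed.

Lemma gen_fb1 b : \sum_c f (Ef (rs c * (as_ c * f b))) = f b.
Proof. by have := gen_fb 1 b; under eq_bigr do rewrite mulr1; rewrite mulr1. Qed.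

Definition iota e (c : 'I_k) : Tp := tp (T0 (as_ c) 1) e.
Definition mu (r : A) (s : Tp) : E := \sum_j lambda (rho r (fixval s j)) * tau (ys j).
Lemma mu_add r : additive_fun (mu r).
Proof.
move=> s s'; rewrite /mu -big_split /=; apply: eq_bigr => j _.
by rewrite /= ffunE rho_add rmorphD mulrDl.
Qed.
Lemma mu_tp r x y : mu r (tp x y) = lambda (rho r x) * y.
Proof.
rewrite /mu {2}(T0_exp y) mulr_sumr; apply: eq_bigr => j _.
by rewrite /= ffunE rho_lam rmorphM /T0 mulrA.
Qed.
Lemma mu_L r x' d e2 s :
  mu r (Lsub (T0 x' (rs d)) e2 s) = lambda (f (Ef (r * x'))) * mu (rs d) s * e2.
Proof.
rewrite {1}(Tp_exp s) (addf_sum (Lsub_add _ _)) (addf_sum (mu_add r)).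
rewrite [mu (rs d) s]/mu mulr_sumr mulr_suml; apply: eq_bigr => j _.
by rewrite Lsub_tp mu_tp rho_T0 rmorphM !mulrA.
Qed.

Section Case1.
Variables (m : nat) (u : Tp -> {ffun 'I_m -> E}) (v : {ffun 'I_m -> E} -> Tp).
Hypotheses (uA : additive_fun u) (vA : additive_fun v) (vu : forall s, v (u s) = s).
Hypothesis uL : forall e1 a s, u (Lsub e1 (lambda a) s) = [ffun j => e1 * u s j * lambda a].
Hypothesis vL : forall e1 a (w : {ffun 'I_m -> E}), v [ffun j => e1 * w j * lambda a] = Lsub e1 (lambda a) (v w).

Definition u1 (e : E) : {ffun 'I_m -> A} := [ffun j => \sum_c rho (rs c) (u (iota e c) j)].
Definition v1 (w : {ffun 'I_m -> A}) : E := \sum_c mu (rs c) (v [ffun j => T0 (as_ c) (w j)]).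

Lemma u1A : additive_fun u1.
Proof.
move=> e e'; apply/ffunP => j; rewrite !ffunE -big_split /=; apply: eq_bigr => c _.
by rewrite /iota tp_addr uA ffunE rho_add.
Qed.
Lemma v1A : additive_fun v1.
Proof.
move=> w w'; rewrite /v1 -big_split /=; apply: eq_bigr => c _.
rewrite -mu_add -vA; congr (mu _ (v _)); apply/ffunP => j.
by rewrite !ffunE T0_addr.
Qed.

Lemma iota_sum e d : iota e d = \sum_c Lsub (T0 (as_ d) (rs c)) (lambda 1) (iota e c).
Proof.
under eq_bigr do rewrite /iota Lsub_tp T0_mul rmorph1 mulr1.
by rewrite -tp_suml -T0_suml -mulr_sumr gen_f mulr1.
Qed.

Lemma v1u1 e : v1 (u1 e) = e.
Proof.
have step d : [ffun j => T0 (as_ d) (u1 e j)] = u (iota e d).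
  rewrite iota_sum (addf_sum uA); apply/ffunP => j; rewrite !ffunE sum_ffunE.
  rewrite T0_sumr; apply: eq_bigr => c _.
  by rewrite uL ffunE rmorph1 mulr1 T0_rho.
rewrite /v1; under eq_bigr do rewrite step vu /iota mu_tp rho_T01.
by rewrite -mulr_suml -rmorph_sum gen_f rmorph1 mul1r.
Qed.

Lemma u1L b a e : u1 (lambda (f b) * e * lambda a) = [ffun j => f b * u1 e j * a].
Proof.
have step c : iota (lambda (f b) * e * lambda a) c =
    \sum_d Lsub (T0 (as_ c * f b) (rs d)) (lambda a) (iota e d).
  under eq_bigr do rewrite /iota Lsub_tp T0_mul.
  rewrite -tp_suml -T0_suml -mulr_sumr gen_f mulr1 /iota -!mulrA -tp_bal.
  by rewrite T0_lam T0_bal mul1r mulr1.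
apply/ffunP => j; rewrite !ffunE; under eq_bigr do rewrite step (addf_sum uA) sum_ffunE (addf_sum (rho_add _)).
under eq_bigr do under eq_bigr do rewrite uL ffunE rho_lam rho_T0.
rewrite exchange_big /= mulr_sumr mulr_suml; apply: eq_bigr => d _.
by rewrite -mulr_suml gen_fb.
Qed.

Lemma v1L b a (w : {ffun 'I_m -> A}) : v1 [ffun j => f b * w j * a] = lambda (f b) * v1 w * lambda a.
Proof.
have step c : [ffun j => T0 (as_ c) ([ffun j => f b * w j * a] j)] =
    \sum_d [ffun j => T0 (as_ c * f b) (rs d) * [ffun j => T0 (as_ d) (w j)] j * lambda a].
  apply/ffunP => j; rewrite sum_ffunE !ffunE.
  under eq_bigr do rewrite !ffunE T0_mul.
  rewrite -mulr_suml -T0_suml -mulr_sumr gen_f mulr1 T0_lam T0_bal mulrA.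
  done.
rewrite /v1; under eq_bigr do rewrite step (addf_sum vA) (addf_sum (mu_add _)).
under eq_bigr do under eq_bigr do rewrite vL mu_L.
rewrite exchange_big /= mulr_sumr mulr_suml; apply: eq_bigr => d _.
rewrite -!mulr_suml -rmorph_sum.
congr (lambda _ * _ * _).
under eq_bigr do rewrite mulrA Ef_r.
by rewrite -rmorph_sum -mulr_suml gen mul1r.
Qed.
End Case1.

Definition iota2 e (c : 'I_k) : Tp := tp e (tau (rs c)).
Definition nuz (z : A) (s : Tp) : E := \sum_j fixval s j * lambda (f (Ef (ys j * z))).
Lemma nuz_add z : additive_fun (nuz z).
Proof.
move=> s s'; rewrite /nuz -big_split /=; apply: eq_bigr => j _.
by rewrite ffunE mulrDl.
Qed.
Lemma nuz_addz s : additive_fun (nuz^~ s).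
Proof.
move=> z z'; rewrite /nuz -big_split /=; apply: eq_bigr => j _.
by rewrite mulrDr Ef_add rmorphD rmorphD mulrDr.
Qed.
Lemma nuz_fb z b s : nuz (z * f b) s = nuz z s * lambda (f b).
Proof.
rewrite /nuz mulr_suml; apply: eq_bigr => j _.
by rewrite mulrA Ef_r rmorphM rmorphM mulrA.
Qed.
Lemma nuz_tp z x y : nuz z (tp x y) = x * lambda (theta y z).
Proof.
rewrite /nuz /=; under eq_bigr do rewrite ffunE -mulrA -rmorphM -th_rlin.
by rewrite -mulr_sumr -rmorph_sum -th_xsum dual1.
Qed.
Lemma nuz_L z e1 e2 s : nuz z (Lsub e1 e2 s) = e1 * nuz (theta e2 z) s.
Proof.
rewrite {1}(Tp_exp s) (addf_sum (Lsub_add _ _)) (addf_sum (nuz_add z)).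
rewrite [nuz _ s]/nuz mulr_sumr; apply: eq_bigr => j _.
by rewrite Lsub_tp nuz_tp th_mul tau_spec mulrA.
Qed.

Section Case2.
Variables (m : nat) (u : Tp -> {ffun 'I_m -> E}) (v : {ffun 'I_m -> E} -> Tp).
Hypotheses (uA : additive_fun u) (vA : additive_fun v) (vu : forall s, v (u s) = s).
Hypothesis uL : forall a e2 s, u (Lsub (lambda a) e2 s) = [ffun j => lambda a * u s j * e2].
Hypothesis vL : forall a e2 (w : {ffun 'I_m -> E}),
  v [ffun j => lambda a * w j * e2] = Lsub (lambda a) e2 (v w).

Definition u2 (e : E) : {ffun 'I_m -> A} := [ffun j => \sum_c theta (u (iota2 e c) j) (as_ c)].
Definition v2 (w : {ffun 'I_m -> A}) : E := \sum_c nuz (as_ c) (v [ffun j => T0 (w j) (rs c)]).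

Lemma u2A : additive_fun u2.
Proof.
move=> e e'; apply/ffunP => j; rewrite !ffunE -big_split /=; apply: eq_bigr => c _.
by rewrite /iota2 tp_addl uA ffunE th_add.
Qed.
Lemma v2A : additive_fun v2.
Proof.
move=> w w'; rewrite /v2 -big_split /=; apply: eq_bigr => c _.
rewrite -nuz_add -vA; congr (nuz _ (v _)); apply/ffunP => j.
by rewrite !ffunE T0_addl.
Qed.

Lemma iota2_sum e d : iota2 e d = \sum_c Lsub (lambda 1) (T0 (as_ c) (rs d)) (iota2 e c).
Proof.
under eq_bigr do rewrite /iota2 Lsub_tp tauT0 T0_mul rmorph1 mul1r mul1r.
by rewrite -tp_sumr -T0_suml gen_f /iota2 tauT0.
Qed.

Lemma v2u2 e : v2 (u2 e) = e.
Proof.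
have step d : [ffun j => T0 (u2 e j) (rs d)] = u (iota2 e d).
  rewrite iota2_sum (addf_sum uA); apply/ffunP => j; rewrite !ffunE sum_ffunE.
  rewrite T0_suml; apply: eq_bigr => c _.
  by rewrite uL ffunE rmorph1 mul1r T0_th.
rewrite /v2; under eq_bigr do rewrite step vu /iota2 nuz_tp tau_spec.
by rewrite -mulr_sumr -rmorph_sum gen_f rmorph1 mulr1.
Qed.

Lemma u2L a b e : u2 (lambda a * e * lambda (f b)) = [ffun j => a * u2 e j * f b].
Proof.
have step c : iota2 (lambda a * e * lambda (f b)) c =
    \sum_d Lsub (lambda a) (T0 (as_ d * f b) (rs c)) (iota2 e d).
  under eq_bigr do rewrite /iota2 Lsub_tp tauT0 T0_mul mul1r.
  rewrite -tp_sumr -T0_suml gen_fb1 /iota2 tp_bal tauT0 T0_laml mulr1.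
  done.
apply/ffunP => j; rewrite !ffunE; under eq_bigr do rewrite step (addf_sum uA) sum_ffunE th_sum.
under eq_bigr do under eq_bigr do rewrite uL ffunE th_mul th_mul th_lam thT0.
rewrite exchange_big /= mulr_sumr mulr_suml; apply: eq_bigr => d _.
rewrite -mulr_sumr -th_xsum.
under eq_bigr do rewrite -mulrA.
by rewrite -!mulr_sumr gen_f mulr1 th_rlin mulrA.
Qed.

Lemma v2L a b (w : {ffun 'I_m -> A}) :
  v2 [ffun j => a * w j * f b] = lambda a * v2 w * lambda (f b).
Proof.
have step c : [ffun j => T0 ([ffun j => a * w j * f b] j) (rs c)] =
    \sum_d [ffun j => lambda a * [ffun j => T0 (w j) (rs d)] j * T0 (as_ d * f b) (rs c)].
  apply/ffunP => j; rewrite sum_ffunE !ffunE.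
  under eq_bigr do rewrite !ffunE -mulrA T0_mul.
  rewrite -mulr_sumr -T0_suml -mulr_sumr.
  under eq_bigr do rewrite mulrA Ef_r.
  by rewrite -rmorph_sum -mulr_suml gen mul1r T0_laml mulrA.
rewrite /v2; under eq_bigr do rewrite step (addf_sum vA) (addf_sum (nuz_add _)).
under eq_bigr do under eq_bigr do rewrite vL nuz_L thT0.
rewrite exchange_big /= mulr_sumr mulr_suml; apply: eq_bigr => d _.
rewrite -mulr_sumr -mulrA -nuz_fb; congr (_ * _).
rewrite -(addf_sum (nuz_addz _)) -mulr_sumr.
by rewrite -rmorph_sum gen rmorph1 mulr1.
Qed.
End Case2.

(* ---- transport from the model E of A (x)_B A to any tensor product ---- *)
Lemma model_summand (S1 S2 : pzRingType) (lft : S1 -> A) (rgt : S2 -> A) m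
  (u0 : E -> {ffun 'I_m -> A}) (v0 : {ffun 'I_m -> A} -> E) :
  additive_fun u0 -> additive_fun v0 -> (forall e, v0 (u0 e) = e) ->
  (forall a b e, u0 (lambda (lft a) * e * lambda (rgt b)) = [ffun j => lft a * u0 e j * rgt b]) ->
  (forall a b (w : {ffun 'I_m -> A}), v0 [ffun j => lft a * w j * rgt b] = lambda (lft a) * v0 w * lambda (rgt b)) ->
  forall (T : zmodType) (t : A -> A -> T), is_tensor f t -> summand_of_power t lft rgt.
Proof.
move=> u0A v0A vu0 u0L v0L T t [tbal tuniv].
have T0bal : balanced f T0.
  by split; [apply: T0_addl | apply: T0_addr | move=> x d y; rewrite T0_bal].
have [[h [hA ht]] huniq] := tuniv E T0 T0bal.
have tuniq := (tuniv T t tbal).2.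
case: tbal => t1 t2 t3.
pose g (e : E) : T := \sum_i t (theta e (xs i)) (ys i).
have gA : additive_fun g.
  by move=> e e'; rewrite /g -big_split /=; apply: eq_bigr => i _; rewrite th_add t1.
have t2A x : additive_fun (t x) by move=> ??; apply: t2.
have gt x y : g (T0 x y) = t x y.
  rewrite /g; under eq_bigr do rewrite thT0 t3.
  by rewrite -(addf_sum (t2A x)) dual2.
have gh s : g (h s) = s.
  apply: (tuniq (fun s => g (h s)) id) => //.
  - by move=> ??; rewrite hA gA.
  - by move=> x y; rewrite ht gt.
have hg e : h (g e) = e.
  rewrite (addf_sum hA) {2}(T0_exp e); apply: eq_bigr => i _; exact: ht.
exists m, (fun s => u0 (h s)), (fun w => g (v0 w)); split.
- by move=> ??; rewrite hA u0A.
- by move=> ??; rewrite v0A gA.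
- by move=> s; rewrite vu0 gh.
move=> a b L [LA Lt].
have hL s : h (L s) = lambda (lft a) * h s * lambda (rgt b).
  apply: (huniq (fun s => h (L s)) (fun s => lambda (lft a) * h s * lambda (rgt b))).
  - by move=> ??; rewrite LA hA.
  - by move=> ??; rewrite hA mulrDr mulrDl.
  - by move=> x y; rewrite Lt !ht T0_laml T0_lam.
split; first by move=> s; rewrite hL u0L.
move=> w; rewrite v0L.
by rewrite -{1}(hg (v0 w)) -hL gh.
Qed.

Lemma main_section : D2 lambda -> D2 f.
Proof.
case=> LD RD; split.
- move=> T t tT.
  have [m [u [v [uA vA vu uLL]]]] := RD Tp tp tp_tensor.
  have uL e1 a s : u (Lsub e1 (lambda a) s) = [ffun j => e1 * u s j * lambda a].
    exact: ((uLL e1 a _ (Lsub_act e1 (lambda a))).1 s).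
  have vL e1 a (w : {ffun 'I_m -> E}) :
      v [ffun j => e1 * w j * lambda a] = Lsub e1 (lambda a) (v w).
    exact: ((uLL e1 a _ (Lsub_act e1 (lambda a))).2 w).
  apply: (@model_summand B A f id m (u1 u) (v1 v)) => //.
  - exact: u1A.
  - exact: v1A.
  - exact: v1u1.
  - by move=> b a e; apply: u1L.
  - by move=> b a w; apply: v1L.
- move=> T t tT.
  have [m [u [v [uA vA vu uLL]]]] := LD Tp tp tp_tensor.
  have uL a e2 s : u (Lsub (lambda a) e2 s) = [ffun j => lambda a * u s j * e2].
    exact: ((uLL a e2 _ (Lsub_act (lambda a) e2)).1 s).
  have vL a e2 (w : {ffun 'I_m -> E}) :
      v [ffun j => lambda a * w j * e2] = Lsub (lambda a) e2 (v w).
    exact: ((uLL a e2 _ (Lsub_act (lambda a) e2)).2 w).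
  apply: (@model_summand A B id f m (u2 u) (v2 v)) => //.
  - exact: u2A.
  - exact: v2A.
  - exact: v2u2.
  - by move=> a b e; apply: u2L.
  - by move=> a b w; apply: v2L.
Qed.
End Main.

Theorem theorem5p7 (A B : pzRingType) (f : {rmorphism B -> A})
    (E : pzRingType) (theta : E -> A -> A) (lambda : {rmorphism A -> E}) :
  Frobenius f -> generator f ->
  is_End f theta -> (forall a x, theta (lambda a) x = a * x) ->
  D2 lambda -> D2 f.
Proof.
move=> [[n [p [q [pA qA pB qB qp]]]] [Phi [PhiL PhiA PhiM PhiI PhiS]]].
move=> [k [gp [gq [gpA gqA gpB gqB gqp]]]] [thE thA [thM th1'] thI thS] thL.
pose Ef := Phi 1.
have PhiE a x : Phi a x = Ef (a * x).
  by have := PhiM 1 1 a x; rewrite rmorph1 !mul1r.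
have Ef_add : additive_fun Ef by case: (PhiL 1).
have Ef_r : forall x b, Ef (x * f b) = Ef x * b by case: (PhiL 1).
have Ef_l x b : Ef (f b * x) = b * Ef x.
  by have := PhiM b 1 1 x; rewrite mulr1 mul1r !PhiE mulr1 mul1r.
have Ef_nd a a' : (forall z, Ef (a * z) = Ef (a' * z)) -> a = a'.
  by move=> H; apply: PhiI => x; rewrite !PhiE H.
have Ef_s phi : rlin_to_B f phi -> exists a, forall z, Ef (a * z) = phi z.
  by move=> /PhiS [a Ha]; exists a => z; rewrite -PhiE Ha.
pose delta (i : 'I_n) : {ffun 'I_n -> B} := [ffun j => (j == i)%:R].
have qE w : q w = \sum_i q (delta i) * f (w i).
  have -> : w = \sum_i [ffun j => delta i j * w i].
    apply/ffunP => j; rewrite sum_ffunE (bigD1 j) //= !ffunE eqxx mul1r big1 ?addr0 //.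
    by move=> i /negbTE ne; rewrite !ffunE eq_sym ne mul0r.
  rewrite (addf_sum qA); apply: eq_bigr => i _; rewrite qB; congr (_ * _).
  by rewrite sum_ffunE (bigD1 i) //= !ffunE eqxx mul1r big1 ?addr0 // => l /negbTE ne; rewrite !ffunE eq_sym ne mul0r.
have [ys Hys] : exists ys : 'I_n -> A, forall i z, Ef (ys i * z) = p z i.
  apply: (@fin_all_exists _ (fun _ => A) (fun i y => forall z, Ef (y * z) = p z i)) => i.
  apply: Ef_s; split; first by move=> x y; rewrite pA ffunE.
  by move=> x b; rewrite pB ffunE.
pose xs i := q (delta i).
have dual1 z : \sum_i xs i * f (Ef (ys i * z)) = z.
  by rewrite -{2}(qp z) qE; apply: eq_bigr => i _; rewrite Hys.
pose dl (c : 'I_k) (z : A) : {ffun 'I_k -> A} := [ffun j => if j == c then z else 0].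
have [rs Hrs] : exists rs : 'I_k -> A, forall c z, Ef (rs c * z) = gq (dl c z).
  apply: (@fin_all_exists _ (fun _ => A) (fun c y => forall z, Ef (y * z) = gq (dl c z))) => c.
  apply: Ef_s; split.
    move=> x y; rewrite -gqA; congr (gq _); apply/ffunP => j; rewrite !ffunE.
    by case: (j == c); rewrite ?addr0.
  move=> x b; rewrite -gqB; congr (gq _); apply/ffunP => j; rewrite !ffunE.
  by case: (j == c); rewrite ?mul0r.
pose as_ c := gp 1 c.
have gen : \sum_c Ef (rs c * as_ c) = 1.
  under eq_bigr do rewrite Hrs.
  rewrite -(addf_sum gqA) -{1}(gqp 1); congr (gq _).
  apply/ffunP => j; rewrite sum_ffunE (bigD1 j) //= !ffunE eqxx big1 ?addr0 //.
  by move=> c /negbTE ne; rewrite ffunE eq_sym ne.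
have tau_ex y : { e : E | forall z, theta e z = f (Ef (y * z)) }.
  apply: constructive_indefinite_description.
  apply: thS; split.
    by move=> x x'; rewrite mulrDr Ef_add rmorphD.
  by move=> x b; rewrite mulrA Ef_r rmorphM.
pose tau y := proj1_sig (tau_ex y).
have tau_spec y z : theta (tau y) z = f (Ef (y * z)) by rewrite /tau; case: (tau_ex y).
apply: (@main_section A B E f theta lambda _ _ _ _ _ thL Ef Ef_add Ef_r Ef_l Ef_nd
   n xs ys dual1 tau tau_spec k as_ rs gen).
- by move=> e; case: (thE e).
- by move=> e; case: (thE e).
- exact: thA.
- exact: thM.
- exact: thI.
Qed.
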